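(* Let $\Pi = (\mathcal{A}, \mathcal{E}, \mathcal{R})$ be an epistemic logic program, $\Phi \subseteq \mathcal{E}$ a guess, and suppose $\mathcal{Y} = \mathcal{SE}_\Pi(\Phi)$ is non-empty. Then there is a set $\mathcal{C} \subseteq \{ Y \mid (X, Y) \in \mathcal{Y} \}$ of size polynomial in the size of $\Pi$ that is $\Phi$-compatible w.r.t. $\mathcal{E}$.
   Context: A literal over a set of atoms $\mathcal{A}$ is an atom $a$ or $\neg a$. An interpretation is $I\subseteq\mathcal{A}$; $I\models a$ iff $a\in I$, $I\models\neg\ell$ iff $I\not\models\ell$. A (plain) logic program $(\mathcal{A},\mathcal{R})$ has rules $a_1\vee\cdots\vee a_l \leftarrow a_{l+1},\ldots,a_m,\neg\ell_1,\ldots,\neg\ell_n$ ($\ell_i$ literals); $H(r)$ head, $B(r)$ body, $B^+(r)=\{a_{l+1},\ldots,a_m\}$; $M\models r$ iff $M\models B(r)$ implies $M\cap H(r)\neq\emptyset$; $\mathrm{Mods}(\Pi)$ is the set of models. GL-reduct: $\Pi^I=(\mathcal{A},\{H(r)\leftarrow B^+(r)\mid r\in\mathcal{R},\ I\models\neg\ell\ \forall\neg\ell\in B(r)\})$ ($\neg\neg\neg a$ treated as $\neg a$). An SE-model of $\Pi$ is $(X,Y)$ with $X\subseteq Y\subseteq\mathcal{A}$, $Y\models\Pi$, $X\models\Pi^Y$; $\mathrm{SE}(\Pi)$ the set of SE-models. An ELP is $(\mathcal{A},\mathcal{E},\mathcal{R})$ with $\mathcal{E}$ a set of epistemic literals $\mathbf{not}\,\ell$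 and rules $a_1\vee\cdots\vee a_k\leftarrow \ell_1,\ldots,\ell_m,\xi_1,\ldots,\xi_j,\neg\xi_{j+1},\ldots,\neg\xi_n$, $\xi_i\in\mathcal{E}$. A guess is $\Phi\subseteq\mathcal{E}$; $\mathcal{I}$ is $\Phi$-compatible w.r.t. $\mathcal{E}$ iff $\mathcal{I}\neq\emptyset$, every $\mathbf{not}\,\ell\in\Phi$ has some $I\in\mathcal{I}$ with $I\not\models\ell$, and every $\mathbf{not}\,\ell\in\mathcal{E}\setminus\Phi$ has $I\models\ell$ for all $I\in\mathcal{I}$. The epistemic reduct $\Pi^\Phi=(\mathcal{A},\mathcal{R}^\Phi)$ replaces each $\mathbf{not}\,\ell\in\Phi$ by $\top$ and every other $\mathbf{not}$ by $\neg$. $\Phi$ is realizable in $\Pi$ iff some subset of $\mathrm{Mods}(\Pi^\Phi)$ is $\Phi$-compatible w.r.t. $\mathcal{E}$. SE-function: $\mathcal{SE}_\Pi(\Phi)=\mathrm{SE}(\Pi^\Phi)$ if $\Phi$ is realizable in $\Pi$, else $\emptyset$. *)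

(* Defs.v *)
From mathcomp Require Import all_boot.
Set Implicit Arguments. Unset Strict Implicit. Unset Printing Implicit Defensive.

Section ELP.
Variable A : finType. (* the set of atoms is the whole finite type A *)

(* A literal over A: (a, true) is the atom a, (a, false) is ~a. *)
Definition lit := (A * bool)%type.
Definition interp := {set A}.

Definition sat_lit (I : interp) (l : lit) : bool :=
  if l.2 then l.1 \in I else l.1 \notin I.

(* Plain rule: a_1 v ... v a_l <- a_{l+1},...,a_m, ~l_1,...,~l_n.
   [pbneg] lists the literals l_i (each occurring negated in the body). *)
Record prule := PRule { phead : seq A; pbpos : seq A; pbneg : seq lit }.
Definition pprog := seq prule.

Definition sat_body (M : interp) (r : prule) : bool :=
  all (fun a => a \in M) (pbpos r) && all (fun l => ~~ sat_lit M l) (pbneg r).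
Definition sat_prule (M : interp) (r : prule) : bool :=
  sat_body M r ==> has (fun a => a \in M) (phead r).
Definition is_model (P : pprog) (M : interp) : bool := all (sat_prule M) P.
Definition Mods (P : pprog) : {set interp} := [set M | is_model P M].

Definition GL (P : pprog) (I : interp) : pprog :=
  [seq PRule (phead r) (pbpos r) [::] | r <- P & all (fun l => ~~ sat_lit I l) (pbneg r)].

Definition SE (P : pprog) : {set interp * interp} :=
  [set XY : interp * interp | (XY.1 \subset XY.2) && is_model P XY.2 && is_model (GL P XY.2) XY.1].

(* Epistemic rules: a_1 v ... v a_k <- l_1,...,l_m, xi_1..xi_j, ~xi_{j+1}..~xi_n.
   An epistemic literal "not l" is represented by the literal l. *)
Record erule := ERule { ehead : seq A; elits : seq lit; eposep : seq lit; enegep : seq lit }.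
Record elp := ELP { eE : {set lit}; eR : seq erule }.

Definition wf_elp (Pi : elp) : Prop :=
  all (fun r => all (fun x => x \in eE Pi) (eposep r) && all (fun x => x \in eE Pi) (enegep r))
      (eR Pi).

Definition flip (l : lit) : lit := (l.1, ~~ l.2).

(* Epistemic reduct of one rule: "not l" in Phi becomes T, otherwise ~l.
   A body containing ~T (i.e. ~xi with xi in Phi) is false: the rule is dropped.
   ~(~l) with l = ~a is ~~~a, treated as ~a; with l = a it is ~~a. In both
   cases the plain negative-body literal is [flip l]. *)
Definition ered (Phi : {set lit}) (r : erule) : option prule :=
  if has (fun x => x \in Phi) (enegep r) then None else
  Some (PRule (ehead r)
         [seq l.1 | l <- elits r & l.2]
         ([seq (l.1, true) | l <- elits r & ~~ l.2]
          ++ [seq l | l <- eposep r & l \notin Phi]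
          ++ [seq flip l | l <- enegep r])).

Definition ereduct (Pi : elp) (Phi : {set lit}) : pprog := pmap (ered Phi) (eR Pi).

Definition compatible (E Phi : {set lit}) (II : {set interp}) : bool :=
  [&& II != set0,
      [forall x in Phi, [exists I in II, ~~ sat_lit I x]] &
      [forall x in E :\: Phi, [forall I in II, sat_lit I x]]].

Definition realizable (Pi : elp) (Phi : {set lit}) : bool :=
  [exists II : {set interp}, (II \subset Mods (ereduct Pi Phi)) && compatible (eE Pi) Phi II].

Definition SEfun (Pi : elp) (Phi : {set lit}) : {set interp * interp} :=
  if realizable Pi Phi then SE (ereduct Pi Phi) else set0.

Definition elp_size (Pi : elp) : nat :=
  #|A| + #|eE Pi| +
  sumn [seq (size (ehead r) + size (elits r) + size (eposep r) + size (enegep r)).+1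
       | r <- eR Pi].

End ELP.

(* Main.v *)
Require Import Defs.
From mathcomp Require Import all_boot.

Lemma model_SE (A : finType) (P : pprog A) (Y : interp A) :
  Y \in Mods P -> (Y, Y) \in SE P.
Proof.
rewrite inE => HY; rewrite inE /=; apply/andP; split; first by rewrite subxx HY.
rewrite /is_model /GL all_map all_filter.
rewrite /is_model in HY; elim: P HY => //= r P IH /andP [h1 h2].
rewrite IH // andbT; apply/implyP => hneg; move: h1.
by rewrite /sat_prule /sat_body /= hneg andbT.
Qed.


Theorem lemma3 :
  exists c k : nat,
  forall (A : finType) (Pi : elp A) (Phi : {set lit A}),
    wf_elp Pi -> Phi \subset eE Pi ->
    SEfun Pi Phi != set0 ->
    exists C : {set {set A}},
      [/\ C \subset [set XY.2 | XY in SEfun Pi Phi],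
          #|C| <= c * (elp_size Pi) ^ k + c
        & compatible (eE Pi) Phi C].
Proof.
exists 1, 1 => A Pi Phi _ hPhi.
rewrite /SEfun; case hr: (realizable Pi Phi); last by rewrite eqxx.
move=> _.
move/existsP: hr => [II /andP [hsub hcomp]].
move/and3P: (hcomp) => [hne hphi hrest].
case/set0Pn: hne => I0 hI0.
pose f (x : lit A) := odflt I0 [pick I in II | ~~ sat_lit I x].
have fII x : f x \in II by rewrite /f; case: pickP => [J /andP [] //|_].
exists (I0 |: [set f x | x in Phi]); split.
- apply/subsetP => I; rewrite in_setU1 => hI.
  have hI' : I \in II by case/orP: hI => [/eqP -> // | /imsetP [x _ ->]].
  apply/imsetP; exists (I, I) => //; apply: model_SE; exact: (subsetP hsub).
- rewrite mul1n expn1.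
  rewrite cardsU1 addnC; apply: leq_add; last exact: leq_b1.
  apply: leq_trans (leq_imset_card _ _) _.
  apply: leq_trans (subset_leq_card hPhi) _.
  by rewrite /elp_size -addnA addnC -addnA leq_addr.
- apply/and3P; split.
  + by apply/set0Pn; exists I0; rewrite setU11.
  + apply/forall_inP => x hx.
    have := forall_inP hphi x hx => /exists_inP [I hI hs].
    apply/exists_inP; exists (f x).
      by rewrite in_setU1 orbC imset_f.
    rewrite /f; case: pickP => [J /andP [] //|/(_ I)]; by rewrite hI hs.
  + apply/forall_inP => x hx; apply/forall_inP => I.
    rewrite in_setU1 => hI.
    have hI' : I \in II by case/orP: hI => [/eqP -> // | /imsetP [y _ ->]].
    exact: (forall_inP (forall_inP hrest x hx) I hI').
Qed.
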